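(* Let $K$ be a field, and let $\Phi,\Psi\colon \bigoplus_{1\le b\le d\le 3}\mathbb{I}[b,d]^{m_{b,d}}\to \bigoplus_{1\le b\le d\le 3}\mathbb{I}[b,d]^{m'_{b,d}}$ be morphisms of representations of the quiver $A_3(bf)\colon 1\leftarrow 2\rightarrow 3$ such that $\Phi=R\,\Psi\,C$ for some automorphisms $C$ of the source and $R$ of the target. Then $\Phi^{1:3}_{1:3}=R^{1:3}_{1:3}\,\Psi^{1:3}_{1:3}\,C^{1:3}_{1:3}$ with $R^{1:3}_{1:3}$ and $C^{1:3}_{1:3}$ isomorphisms; in particular $\Phi^{1:3}_{1:3}$ and $\Psi^{1:3}_{1:3}$ are isomorphic as objects of the arrow category of representations. Consequently, for a morphism $\varphi\colon V\to W$ of finite-dimensional representations of $A_3(bf)$, the isomorphism class of the block $(\eta_W\varphi\eta_V^{-1})^{1:3}_{1:3}$ does not depend on the choice of isomorphisms $\eta_V,\eta_W$ of $V,W$ onto direct sums of interval representations.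
   Context: $\mathbb{I}[b,d]$ denotes the interval representation with $K$ at vertices $b,\dots,d$, $0$ elsewhere, identity maps between consecutive copies of $K$ and zero maps otherwise; $\mathbb{I}[b,d]^m$ is the direct sum of $m$ copies. For a morphism $\Phi\colon\bigoplus\mathbb{I}[b,d]^{m_{b,d}}\to\bigoplus\mathbb{I}[b,d]^{m'_{b,d}}$, its block $\Phi^{c:d}_{a:b}$ is $\pi_{c,d}\circ\Phi\circ\iota_{a,b}$ with $\iota_{a,b}$ the canonical summand inclusion into the source and $\pi_{c,d}$ the canonical summand projection of the target. The arrow category of representations has morphisms as objects; a morphism from $f\colon M\to N$ to $f'\colon M'\to N'$ is a pair $(F_M,F_N)$ of morphisms with $F_Nf=f'F_M$; two objects are isomorphic if such a pair of isomorphisms exists. *)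

(* Defs.v *)
(* Representations of the quiver A3(bf): 1 <- 2 -> 3,
   concretely: vector spaces K^d1, K^d2, K^d3 and matrices acting on
   column vectors, ra : V2 -> V1, rb : V2 -> V3. *)
From HB Require Import structures.
From mathcomp Require Import all_boot all_order all_algebra.
Set Implicit Arguments. Unset Strict Implicit. Unset Printing Implicit Defensive.
Import GRing.Theory.
Local Open Scope ring_scope.

Record rep (K : fieldType) := Rep {
  d1 : nat; d2 : nat; d3 : nat;
  ra : 'M[K]_(d1, d2);
  rb : 'M[K]_(d3, d2) }.

Record mor (K : fieldType) (V W : rep K) := Mor {
  m1 : 'M[K]_(d1 W, d1 V);
  m2 : 'M[K]_(d2 W, d2 V);
  m3 : 'M[K]_(d3 W, d3 V) }.

Definition is_mor (K : fieldType) (V W : rep K) (f : mor V W) : Prop :=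
  m1 f *m ra V = ra W *m m2 f /\ m3 f *m rb V = rb W *m m2 f.

Definition mcomp (K : fieldType) (U V W : rep K) (g : mor V W) (f : mor U V)
    : mor U W := @Mor K U W (m1 g *m m1 f) (m2 g *m m2 f) (m3 g *m m3 f).

Definition idm (K : fieldType) (V : rep K) : mor V V := @Mor K V V 1%:M 1%:M 1%:M.

Definition zerom (K : fieldType) (V W : rep K) : mor V W := @Mor K V W 0 0 0.

Definition is_iso (K : fieldType) (V W : rep K) (f : mor V W) : Prop :=
  is_mor f /\ exists g : mor W V, is_mor g /\ mcomp g f = idm V /\ mcomp f g = idm W.

Definition arrow_iso (K : fieldType) (M N M' N' : rep K)
  (f : mor M N) (f' : mor M' N') : Prop :=
  is_mor f /\ is_mor f' /\
  exists (FM : mor M M') (FN : mor N N'),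
    is_iso FM /\ is_iso FN /\ mcomp FN f = mcomp f' FM.

(* Interval representation I[b,d]^n : K^n at vertices b..d, 0 elsewhere;
   identity between consecutive copies of K^n, zero otherwise
   (the matrix \matrix_(i,j) (i == j) is the identity when both sides are
   K^n, and an empty matrix when one side is 0). *)
Definition inv (b d i : nat) : bool := (b <= i <= d)%N.
Definition Irep (K : fieldType) (b d n : nat) : rep K :=
  @Rep K (if inv b d 1 then n else 0%N) (if inv b d 2 then n else 0%N)
         (if inv b d 3 then n else 0%N)
         (\matrix_(i, j) ((i : nat) == j)%:R) (\matrix_(i, j) ((i : nat) == j)%:R).

Definition dsum (K : fieldType) (V W : rep K) : rep K :=
  @Rep K (d1 V + d1 W) (d2 V + d2 W) (d3 V + d3 W)
    (block_mx (ra V) 0 0 (ra W)) (block_mx (rb V) 0 0 (rb W)).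

Definition in1 (K : fieldType) (V W : rep K) : mor V (dsum V W) :=
  @Mor K V (dsum V W) (col_mx 1%:M 0) (col_mx 1%:M 0) (col_mx 1%:M 0).
Definition in2 (K : fieldType) (V W : rep K) : mor W (dsum V W) :=
  @Mor K W (dsum V W) (col_mx 0 1%:M) (col_mx 0 1%:M) (col_mx 0 1%:M).
Definition pr1 (K : fieldType) (V W : rep K) : mor (dsum V W) V :=
  @Mor K (dsum V W) V (row_mx 1%:M 0) (row_mx 1%:M 0) (row_mx 1%:M 0).
Definition pr2 (K : fieldType) (V W : rep K) : mor (dsum V W) W :=
  @Mor K (dsum V W) W (row_mx 0 1%:M) (row_mx 0 1%:M) (row_mx 0 1%:M).

Definition Isum (K : fieldType) (m : nat -> nat -> nat) : rep K :=
  dsum (Irep K 1 1 (m 1 1)%N) (dsum (Irep K 1 2 (m 1 2)%N)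
  (dsum (Irep K 1 3 (m 1 3)%N) (dsum (Irep K 2 2 (m 2 2)%N)
  (dsum (Irep K 2 3 (m 2 3)%N) (Irep K 3 3 (m 3 3)%N))))).

(* canonical summand inclusion iota_{b,d} (zero for (b,d) outside the range) *)
Definition iota (K : fieldType) (m : nat -> nat -> nat) (b d : nat)
  : mor (Irep K b d (m b d)) (Isum K m) :=
  match b as b', d as d' return mor (Irep K b' d' (m b' d')) (Isum K m) with
  | 1, 1 => in1 _ _
  | 1, 2 => mcomp (in2 _ _) (in1 _ _)
  | 1, 3 => mcomp (in2 _ _) (mcomp (in2 _ _) (in1 _ _))
  | 2, 2 => mcomp (in2 _ _) (mcomp (in2 _ _) (mcomp (in2 _ _) (in1 _ _)))
  | 2, 3 => mcomp (in2 _ _) (mcomp (in2 _ _) (mcomp (in2 _ _) (mcomp (in2 _ _) (in1 _ _))))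
  | 3, 3 => mcomp (in2 _ _) (mcomp (in2 _ _) (mcomp (in2 _ _) (mcomp (in2 _ _) (in2 _ _))))
  | _, _ => zerom _ _
  end%N.

Definition proj (K : fieldType) (m : nat -> nat -> nat) (b d : nat)
  : mor (Isum K m) (Irep K b d (m b d)) :=
  match b as b', d as d' return mor (Isum K m) (Irep K b' d' (m b' d')) with
  | 1, 1 => pr1 _ _
  | 1, 2 => mcomp (pr1 _ _) (pr2 _ _)
  | 1, 3 => mcomp (pr1 _ _) (mcomp (pr2 _ _) (pr2 _ _))
  | 2, 2 => mcomp (pr1 _ _) (mcomp (pr2 _ _) (mcomp (pr2 _ _) (pr2 _ _)))
  | 2, 3 => mcomp (pr1 _ _) (mcomp (pr2 _ _) (mcomp (pr2 _ _) (mcomp (pr2 _ _) (pr2 _ _))))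
  | 3, 3 => mcomp (pr2 _ _) (mcomp (pr2 _ _) (mcomp (pr2 _ _) (mcomp (pr2 _ _) (pr2 _ _))))
  | _, _ => zerom _ _
  end%N.

(* block Phi^{c:d}_{a:b} = pi_{c,d} o Phi o iota_{a,b} *)
Definition blk (K : fieldType) (m m' : nat -> nat -> nat)
  (Phi : mor (Isum K m) (Isum K m')) (a b c d : nat)
  : mor (Irep K a b (m a b)) (Irep K c d (m' c d)) :=
  mcomp (proj K m' c d) (mcomp Phi (iota K m a b)).

(* Main.v *)
Require Import Defs.
From HB Require Import structures.
From mathcomp Require Import all_boot all_order all_algebra.
Set Implicit Arguments. Unset Strict Implicit. Unset Printing Implicit Defensive.
Import GRing.Theory.
Local Open Scope ring_scope.

Section Gen.
Variable F : fieldType.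

Definition c1 n1 n2 : 'M[F]_(n1 + n2, n1) := col_mx 1%:M 0.
Definition c2 n1 n2 : 'M[F]_(n1 + n2, n2) := col_mx 0 1%:M.
Definition r1 n1 n2 : 'M[F]_(n1, n1 + n2) := row_mx 1%:M 0.
Definition r2 n1 n2 : 'M[F]_(n2, n1 + n2) := row_mx 0 1%:M.

Lemma split1 n1 n2 : (1%:M : 'M[F]_(n1 + n2)) =
  c1 n1 n2 *m r1 n1 n2 + c2 n1 n2 *m 1%:M *m r2 n1 n2.
Proof.
rewrite mulmx1 /c1 /c2 /r1 /r2 !mul_col_row !mul1mx !mul0mx.
by rewrite add_block_mx !addr0 !add0r -scalar_mx_block.
Qed.

Lemma r1c1 n1 n2 : r1 n1 n2 *m c1 n1 n2 = 1%:M.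
Proof. by rewrite /r1 /c1 mul_row_col mul1mx mul0mx addr0. Qed.
Lemma r2c2 n1 n2 : r2 n1 n2 *m c2 n1 n2 = 1%:M.
Proof. by rewrite /r2 /c2 mul_row_col mul1mx mul0mx add0r. Qed.

Lemma id6 n1 n2 n3 n4 n5 n6 :
  (1%:M : 'M[F]_(n1 + (n2 + (n3 + (n4 + (n5 + n6)))))) =
  c1 _ _ *m r1 _ _
  + (c2 _ _ *m c1 _ _) *m (r1 _ _ *m r2 _ _)
  + (c2 _ _ *m (c2 _ _ *m c1 _ _)) *m (r1 _ _ *m (r2 _ _ *m r2 _ _))
  + (c2 _ _ *m (c2 _ _ *m (c2 _ _ *m c1 n4 (n5 + n6)))) *m (r1 _ _ *m (r2 _ _ *m (r2 _ _ *m r2 n1 _)))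
  + (c2 _ _ *m (c2 _ _ *m (c2 _ _ *m (c2 _ _ *m c1 n5 n6)))) *m (r1 _ _ *m (r2 _ _ *m (r2 _ _ *m (r2 _ _ *m r2 n1 _))))
  + (c2 _ _ *m (c2 _ _ *m (c2 _ _ *m (c2 _ _ *m c2 n5 n6)))) *m (r2 _ _ *m (r2 _ _ *m (r2 _ _ *m (r2 _ _ *m r2 n1 _)))).
Proof.
rewrite split1 split1 split1 split1 split1 mulmx1.
rewrite !(mulmxDr, mulmxDl) !mulmxA !addrA.
done.
Qed.

End Gen.
Section Mor.
Variable K : fieldType.

Lemma mor_eq (V W : rep K) (f g : mor V W) :
  m1 f = m1 g -> m2 f = m2 g -> m3 f = m3 g -> f = g.
Proof. by case: f; case: g => /= ? ? ? ? ? ? -> -> ->. Qed.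

Lemma is_mor_comp (U V W : rep K) (g : mor V W) (f : mor U V) :
  is_mor g -> is_mor f -> is_mor (mcomp g f).
Proof.
case=> g1 g3 [f1 f3]; split => /=.
  by rewrite -mulmxA f1 !mulmxA g1.
by rewrite -mulmxA f3 !mulmxA g3.
Qed.

Lemma mcompA (U V W X : rep K) (h : mor W X) (g : mor V W) (f : mor U V) :
  mcomp h (mcomp g f) = mcomp (mcomp h g) f.
Proof. by apply: mor_eq; rewrite /= mulmxA. Qed.

Lemma mcomp1 (V W : rep K) (f : mor V W) : mcomp f (idm V) = f.
Proof. by apply: mor_eq; rewrite /= mulmx1. Qed.
Lemma mcomp1l (V W : rep K) (f : mor V W) : mcomp (idm W) f = f.
Proof. by apply: mor_eq; rewrite /= mul1mx. Qed.

Lemma is_mor_in1 (V W : rep K) : is_mor (in1 V W).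
Proof. by split; rewrite /= mul_col_mx mul_block_col !mul1mx !mul0mx !mulmx1 !mulmx0 !addr0. Qed.
Lemma is_mor_in2 (V W : rep K) : is_mor (in2 V W).
Proof. by split; rewrite /= mul_col_mx mul_block_col !mul1mx !mul0mx !mulmx1 !mulmx0 !add0r. Qed.
Lemma is_mor_pr1 (V W : rep K) : is_mor (pr1 V W).
Proof. by split; rewrite /= mul_row_block mul_mx_row !mul1mx !mul0mx !mulmx1 !mulmx0 !addr0. Qed.
Lemma is_mor_pr2 (V W : rep K) : is_mor (pr2 V W).
Proof. by split; rewrite /= mul_row_block mul_mx_row !mul1mx !mul0mx !mulmx1 !mulmx0 !add0r. Qed.

Lemma is_mor_idm (V : rep K) : is_mor (idm V).
Proof. by split; rewrite /= mul1mx mulmx1. Qed.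

Lemma idmx n : (\matrix_(i < n, j < n) ((i : nat) == j)%:R : 'M[K]_n) = 1%:M.
Proof. by apply/matrixP => i j; rewrite !mxE. Qed.

Lemma hom12 a b (f : mor (Irep K 1 2 a) (Irep K 1 3 b)) :
  is_mor f -> [/\ m1 f = 0, m2 f = 0 & m3 f = 0].
Proof.
case; rewrite /= !idmx mul1mx mulmx1 => e1 e3.
have h2 : m2 f = 0 by rewrite -e3 flatmx0 mulmx0.
by split => //; [rewrite e1 h2 | apply: thinmx0].
Qed.

Lemma hom22 a b (f : mor (Irep K 2 2 a) (Irep K 1 3 b)) :
  is_mor f -> [/\ m1 f = 0, m2 f = 0 & m3 f = 0].
Proof.
case; rewrite /= !idmx !mul1mx => e1 e3.
have h2 : m2 f = 0 by rewrite -e1 flatmx0 mulmx0.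
by split => //; apply: thinmx0.
Qed.

Lemma hom23 a b (f : mor (Irep K 2 3 a) (Irep K 1 3 b)) :
  is_mor f -> [/\ m1 f = 0, m2 f = 0 & m3 f = 0].
Proof.
case; rewrite /= !idmx !mul1mx => e1 e3.
have h2 : m2 f = 0 by rewrite -e1 flatmx0 mulmx0.
by split => //; [apply: thinmx0 | rewrite -[m3 f]mulmx1 e3 h2].
Qed.

Lemma hom11 a b (f : mor (Irep K 1 3 a) (Irep K 1 1 b)) :
  is_mor f -> [/\ m1 f = 0, m2 f = 0 & m3 f = 0].
Proof.
case; rewrite /= !idmx !mulmx1 => e1 e3.
by split; [rewrite e1 flatmx0 mulmx0 | apply: flatmx0 | apply: flatmx0].
Qed.

Lemma hom33 a b (f : mor (Irep K 1 3 a) (Irep K 3 3 b)) :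
  is_mor f -> [/\ m1 f = 0, m2 f = 0 & m3 f = 0].
Proof.
case; rewrite /= !idmx !mulmx1 => e1 e3.
by split; [apply: flatmx0 | apply: flatmx0 | rewrite e3 flatmx0 mulmx0].
Qed.

End Mor.
Section Key.
Variable K : fieldType.

Ltac mors := rewrite /proj /Defs.iota /=; repeat first [ apply: is_mor_comp | apply: is_mor_in1 | apply: is_mor_in2
  | apply: is_mor_pr1 | apply: is_mor_pr2 ].

Lemma key_mx (a b c d e n1 n2 n3 n4 n5 n6 : nat) (P : 'M[K]_(a, b)) (A : 'M_(b, c))
  (B : 'M_(c, d)) (I : 'M_(d, e))
  (i1 : 'M_(c, n1)) (i2 : 'M_(c, n2)) (i3 : 'M_(c, n3)) (i4 : 'M_(c, n4)) (i5 : 'M_(c, n5)) (i6 : 'M_(c, n6))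
  (p1 : 'M_(n1, c)) (p2 : 'M_(n2, c)) (p3 : 'M_(n3, c)) (p4 : 'M_(n4, c)) (p5 : 'M_(n5, c)) (p6 : 'M_(n6, c)) :
  1%:M = i1 *m p1 + i2 *m p2 + i3 *m p3 + i4 *m p4 + i5 *m p5 + i6 *m p6 ->
  P *m (A *m i2) = 0 -> P *m (A *m i4) = 0 -> P *m (A *m i5) = 0 ->
  p1 *m (B *m I) = 0 -> p6 *m (B *m I) = 0 ->
  P *m ((A *m B) *m I) = (P *m (A *m i3)) *m (p3 *m (B *m I)).
Proof.
move=> hs h2 h4 h5 h1 h6.
have te n (i : 'M_(c, n)) p : P *m ((A *m (i *m p) *m B) *m I) = (P *m (A *m i)) *m (p *m (B *m I)).
  by rewrite !mulmxA.
rewrite -{1}[A](mulmx1 A) hs !(mulmxDr, mulmxDl) !te h2 h4 h5 h1 h6.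
rewrite ?mul0mx ?mulmx0 ?add0r ?addr0.
done.
Qed.

Lemma mor_proj (m : nat -> nat -> nat) (b d : nat) : (b,d) \in [:: (1,1);(1,2);(1,3);(2,2);(2,3);(3,3)]%N -> is_mor (proj K m b d).
Proof.
rewrite !inE => /orP[|/orP[|/orP[|/orP[|/orP[]]]]] /eqP [-> ->]; mors.
Qed.
Lemma mor_iota (m : nat -> nat -> nat) (b d : nat) : (b,d) \in [:: (1,1);(1,2);(1,3);(2,2);(2,3);(3,3)]%N -> is_mor (Defs.iota K m b d).
Proof.
rewrite !inE => /orP[|/orP[|/orP[|/orP[|/orP[]]]]] /eqP [-> ->]; mors.
Qed.

Lemma dec1 (m : nat -> nat -> nat) : 1%:M = m1 (Defs.iota K m 1 1) *m m1 (proj K m 1 1) + m1 (Defs.iota K m 1 2) *m m1 (proj K m 1 2) + m1 (Defs.iota K m 1 3) *m m1 (proj K m 1 3) + m1 (Defs.iota K m 2 2) *m m1 (proj K m 2 2) + m1 (Defs.iota K m 2 3) *m m1 (proj K m 2 3) + m1 (Defs.iota K m 3 3) *m m1 (proj K m 3 3).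
Proof. exact: id6. Qed.

Lemma dec2 (m : nat -> nat -> nat) : 1%:M = m2 (Defs.iota K m 1 1) *m m2 (proj K m 1 1) + m2 (Defs.iota K m 1 2) *m m2 (proj K m 1 2) + m2 (Defs.iota K m 1 3) *m m2 (proj K m 1 3) + m2 (Defs.iota K m 2 2) *m m2 (proj K m 2 2) + m2 (Defs.iota K m 2 3) *m m2 (proj K m 2 3) + m2 (Defs.iota K m 3 3) *m m2 (proj K m 3 3).
Proof. exact: id6. Qed.

Lemma dec3 (m : nat -> nat -> nat) : 1%:M = m3 (Defs.iota K m 1 1) *m m3 (proj K m 1 1) + m3 (Defs.iota K m 1 2) *m m3 (proj K m 1 2) + m3 (Defs.iota K m 1 3) *m m3 (proj K m 1 3) + m3 (Defs.iota K m 2 2) *m m3 (proj K m 2 2) + m3 (Defs.iota K m 2 3) *m m3 (proj K m 2 3) + m3 (Defs.iota K m 3 3) *m m3 (proj K m 3 3).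
Proof. exact: id6. Qed.

Lemma key m m' m'' (A : mor (Isum K m') (Isum K m'')) (B : mor (Isum K m) (Isum K m')) :
  is_mor A -> is_mor B -> blk (mcomp A B) 1 3 1 3 = mcomp (blk A 1 3 1 3) (blk B 1 3 1 3).
Proof.
move=> hA hB.
have [a12 b12 c12] := hom12 (is_mor_comp (f := mcomp A (Defs.iota K m' 1 2)) (g := proj K m'' 1 3) (@mor_proj m'' 1 3 isT) (is_mor_comp hA (@mor_iota m' 1 2 isT))).
have [a22 b22 c22] := hom22 (is_mor_comp (f := mcomp A (Defs.iota K m' 2 2)) (g := proj K m'' 1 3) (@mor_proj m'' 1 3 isT) (is_mor_comp hA (@mor_iota m' 2 2 isT))).
have [a23 b23 c23] := hom23 (is_mor_comp (f := mcomp A (Defs.iota K m' 2 3)) (g := proj K m'' 1 3) (@mor_proj m'' 1 3 isT) (is_mor_comp hA (@mor_iota m' 2 3 isT))).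
have [a11 b11 c11] := hom11 (is_mor_comp (f := mcomp B (Defs.iota K m 1 3)) (g := proj K m' 1 1) (@mor_proj m' 1 1 isT) (is_mor_comp hB (@mor_iota m 1 3 isT))).
have [a33 b33 c33] := hom33 (is_mor_comp (f := mcomp B (Defs.iota K m 1 3)) (g := proj K m' 3 3) (@mor_proj m' 3 3 isT) (is_mor_comp hB (@mor_iota m 1 3 isT))).
apply: mor_eq => /=.
- exact: (key_mx (dec1 m') a12 a22 a23 a11 a33).
- exact: (key_mx (dec2 m') b12 b22 b23 b11 b33).
- exact: (key_mx (dec3 m') c12 c22 c23 c11 c33).
Qed.

End Key.
Section Final.
Variable K : fieldType.

Lemma pimx n1 n2 n3 n4 n5 n6 :
  (r1 K n3 (n4 + (n5 + n6)) *m (r2 K n2 _ *m r2 K n1 (n2 + (n3 + (n4 + (n5 + n6)))))) *m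
    (1%:M *m (c2 K n1 _ *m (c2 K n2 _ *m c1 K n3 (n4 + (n5 + n6))))) = 1%:M.
Proof.
rewrite mul1mx -!mulmxA (mulmxA (r2 K n1 _)) r2c2 mul1mx (mulmxA (r2 K n2 _)) r2c2 mul1mx r1c1.
done.
Qed.

Lemma mid (A B C D E : rep K) (a : mor D E) (b : mor C D) (c : mor B C) (d : mor A B) :
  mcomp (mcomp a b) (mcomp c d) = mcomp a (mcomp (mcomp b c) d).
Proof. by rewrite !mcompA. Qed.

Lemma blk_id (m : nat -> nat -> nat) :
  blk (idm (Isum K m)) 1 3 1 3 = idm (Irep K 1 3 (m 1 3)).
Proof. by apply: mor_eq; rewrite /=; exact: pimx. Qed.

Lemma is_mor_blk m m' (A : mor (Isum K m) (Isum K m')) :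
  is_mor A -> is_mor (blk A 1 3 1 3).
Proof.
move=> hA; apply: is_mor_comp; first exact: (@mor_proj K m' 1 3 isT).
by apply: is_mor_comp => //; exact: (@mor_iota K m 1 3 isT).
Qed.

Lemma blk_iso m m' (A : mor (Isum K m) (Isum K m')) :
  is_iso A -> is_iso (blk A 1 3 1 3).
Proof.
case=> hA [g [hg [e1 e2]]]; split; first exact: is_mor_blk.
exists (blk g 1 3 1 3); split; first exact: is_mor_blk.
by split; rewrite -key // ?e1 ?e2 blk_id.
Qed.

Lemma gen ma mb ma' mb' (Psi : mor (Isum K ma) (Isum K mb))
  (Phi : mor (Isum K ma') (Isum K mb')) (R : mor (Isum K mb) (Isum K mb'))
  (C : mor (Isum K ma') (Isum K ma)) :
  is_mor Phi -> is_mor Psi -> is_iso R -> is_iso C ->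
  Phi = mcomp R (mcomp Psi C) ->
  [/\ blk Phi 1 3 1 3 = mcomp (blk R 1 3 1 3) (mcomp (blk Psi 1 3 1 3) (blk C 1 3 1 3)),
      is_iso (blk R 1 3 1 3), is_iso (blk C 1 3 1 3) &
      arrow_iso (blk Phi 1 3 1 3) (blk Psi 1 3 1 3)].
Proof.
move=> hPhi hPsi hR hC E.
have hRm := hR.1; have hCm := hC.1.
have fact : blk Phi 1 3 1 3 = mcomp (blk R 1 3 1 3) (mcomp (blk Psi 1 3 1 3) (blk C 1 3 1 3)).
  by rewrite E key //; [rewrite key | apply: is_mor_comp].
split => //; try exact: blk_iso.
split; first exact: is_mor_blk.
split; first exact: is_mor_blk.
case: hR => _ [Ri [hRi [e1 e2]]].
exists (blk C 1 3 1 3), (blk Ri 1 3 1 3).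
split; first exact: blk_iso.
split.
  apply: blk_iso; split => //; exists R; split => //.
by rewrite fact mcompA -key // e1 blk_id mcomp1l.
Qed.

End Final.

Theorem mainTheorem4 (K : fieldType) :
  (forall (m m' : nat -> nat -> nat)
          (Phi Psi : mor (Isum K m) (Isum K m'))
          (R : mor (Isum K m') (Isum K m')) (C : mor (Isum K m) (Isum K m)),
     is_mor Phi -> is_mor Psi -> is_iso R -> is_iso C ->
     Phi = mcomp R (mcomp Psi C) ->
     [/\ blk Phi 1 3 1 3 = mcomp (blk R 1 3 1 3) (mcomp (blk Psi 1 3 1 3) (blk C 1 3 1 3)),
         is_iso (blk R 1 3 1 3),
         is_iso (blk C 1 3 1 3) &
         arrow_iso (blk Phi 1 3 1 3) (blk Psi 1 3 1 3)]) /\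
  (forall (V W : rep K) (phi : mor V W), is_mor phi ->
   forall (mV mW nV nW : nat -> nat -> nat)
          (etaV : mor V (Isum K mV)) (etaVi : mor (Isum K mV) V)
          (etaW : mor W (Isum K mW))
          (etaV' : mor V (Isum K nV)) (etaVi' : mor (Isum K nV) V)
          (etaW' : mor W (Isum K nW)),
     is_iso etaV -> is_mor etaVi ->
     mcomp etaVi etaV = idm V -> mcomp etaV etaVi = idm (Isum K mV) ->
     is_iso etaW ->
     is_iso etaV' -> is_mor etaVi' ->
     mcomp etaVi' etaV' = idm V -> mcomp etaV' etaVi' = idm (Isum K nV) ->
     is_iso etaW' ->
     arrow_iso (blk (mcomp etaW (mcomp phi etaVi)) 1 3 1 3)
               (blk (mcomp etaW' (mcomp phi etaVi')) 1 3 1 3)).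
Proof.
split.
  move=> m m' Phi Psi R C hPhi hPsi hR hC E; exact: gen hPhi hPsi hR hC E.
move=> V W phi hphi mV mW nV nW etaV etaVi etaW etaV' etaVi' etaW'
  hV hVi eV1 eV2 hW hV' hVi' eV1' eV2' hW'.
have hWm := hW.1; have hW'm := hW'.1; have hVm := hV.1; have hV'm := hV'.1.
case: hW' => _ [Wi' [hWi' [f1 f2]]].
pose R := mcomp etaW Wi'.
pose C := mcomp etaV' etaVi.
have hR : is_iso R.
  split; first exact: is_mor_comp.
  case: hW => _ [Wi [hWi [g1 g2]]].
  exists (mcomp etaW' Wi); split; first exact: is_mor_comp.
  split.
    by rewrite /R mid g1 mcomp1l f2.
  by rewrite /R mid f1 mcomp1l g2.
have hC : is_iso C.
  split; first exact: is_mor_comp.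
  exists (mcomp etaV etaVi'); split; first exact: is_mor_comp.
  split.
    by rewrite /C mid eV1' mcomp1l eV2.
  by rewrite /C mid eV1 mcomp1l eV2'.
have := @gen K nV nW mV mW (mcomp etaW' (mcomp phi etaVi'))
  (mcomp etaW (mcomp phi etaVi)) R C.
case=> //.
- by apply: is_mor_comp => //; apply: is_mor_comp.
- by apply: is_mor_comp => //; apply: is_mor_comp.
- rewrite /R /C !mcompA -(mcompA etaW Wi') f1 mcomp1.
  by rewrite -!mcompA (mcompA etaVi') eV1' mcomp1l.
Qed.
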